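(* Let $\mathbb{F}\in\{\mathbb{R},\mathbb{C}\}$ and let $\mathcal{P}(M,N)$ be the set of Parseval frames for $\mathbb{F}^N$ consisting of $M$ vectors. If $\Phi=\{\varphi_i\}_{i=1}^M\in\mathcal{P}(M,N)$ is an equiangular Parseval frame and $\Psi=\{\psi_i\}_{i=1}^M\in\mathcal{P}(M,N)$, then $TC(\Psi)\leq TC(\Phi)$. Consequently, when an equiangular Parseval frame exists in $\mathcal{P}(M,N)$, the maximizers of $TC$ over $\mathcal{P}(M,N)$ (equivalently, the maximizers of $\sum_{i,j}|\langle\varphi_i,\varphi_j\rangle|$ over $\mathcal{P}(M,N)$) are precisely the equiangular Parseval frames in $\mathcal{P}(M,N)$.
   Context: A Parseval frame for $\mathbb{F}^N$ is a family $\Phi=\{\varphi_i\}_{i=1}^M\subseteq\mathbb{F}^N$ whose $N\times M$ matrix (columns $\varphi_i$) satisfies $\Phi\Phi^*=I$. A Parseval frame is equiangular if $\|\varphi_i\|=\|\varphi_j\|$ for all $i,j$ and there is a constant $c$ with $|\langle\varphi_i,\varphi_j\rangle|=c$ for all $i\neq j$. The total coherence is $TC(\Phi)=\sum_{i\neq j}|\langle\varphi_i,\varphi_j\rangle|$. *)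

(* Defs.v *)
(* F in {R, C} is modelled with R : rcfType (a real closed
   field, e.g. the reals) and C := R[i] (complex numbers over R).
   Real frames are complex matrices all of whose entries are real. *)
From HB Require Import structures.
From mathcomp Require Import all_boot all_order all_algebra.
From mathcomp Require Import complex.
Set Implicit Arguments. Unset Strict Implicit. Unset Printing Implicit Defensive.
Import Order.TTheory GRing.Theory Num.Theory.
Local Open Scope ring_scope.

Inductive scalar_field := RealField | ComplexField.

Section Frames.
Variable R : rcfType.
Local Notation C := R[i].
Variables (N M : nat).

Definition over_field (K : scalar_field) (Phi : 'M[C]_(N, M)) : Prop :=
  match K with
  | RealField => forall k i, Phi k i \is Num.real
  | ComplexField => True
  end.

Definition adjmx (Phi : 'M[C]_(N, M)) : 'M[C]_(M, N) := (map_mx Num.conj Phi)^T.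

Definition parseval (K : scalar_field) (Phi : 'M[C]_(N, M)) : Prop :=
  over_field K Phi /\ Phi *m adjmx Phi = 1%:M.

Definition ip (Phi : 'M[C]_(N, M)) (i j : 'I_M) : C :=
  \sum_(k < N) Phi k i * Num.conj (Phi k j).

Definition vnorm (Phi : 'M[C]_(N, M)) (i : 'I_M) : C :=
  sqrtC (\sum_(k < N) `|Phi k i| ^+ 2).

Definition equiangular (Phi : 'M[C]_(N, M)) : Prop :=
  (forall i j, vnorm Phi i = vnorm Phi j) /\
  exists c : C, forall i j, i != j -> `|ip Phi i j| = c.

Definition TC (Phi : 'M[C]_(N, M)) : C :=
  \sum_(i < M) \sum_(j < M | j != i) `|ip Phi i j|.

Definition TCfull (Phi : 'M[C]_(N, M)) : C :=
  \sum_(i < M) \sum_(j < M) `|ip Phi i j|.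

End Frames.

(* Main.v *)
Require Import Defs.
From HB Require Import structures.
From mathcomp Require Import all_boot all_order all_algebra.
From mathcomp Require Import complex ring zify.
Import Order.TTheory GRing.Theory Num.Theory.
Set Implicit Arguments. Unset Strict Implicit.
Local Open Scope ring_scope.
Section S.
Variable R : rcfType.
Local Notation C := R[i].

Lemma cs_id (I : finType) (P : pred I) (a : I -> C) :
  \sum_(x | P x) \sum_(y | P y) (a x - a y) ^+ 2 =
  2%:R * ((\sum_(x | P x) 1) * \sum_(x | P x) a x ^+ 2 - (\sum_(x | P x) a x) ^+ 2).
Proof.
set n := \sum_(x | P x) 1; set s1 := \sum_(x | P x) a x; set s2 := \sum_(x | P x) a x ^+ 2.
transitivity (\sum_(x | P x) (a x ^+ 2 * n - 2%:R * a x * s1 + s2)).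
  apply: eq_bigr => x _.
  under eq_bigr => y _ do rewrite sqrrB.
  rewrite big_split sumrB /= /n /s1 /s2 sumrMnl mulr_sumr mulr_sumr.
  congr (_ - _ + _); first by apply: eq_bigr => y _; rewrite mulr1.
  rewrite -!mulr_sumr; ring.
rewrite big_split sumrB /= -!mulr_suml -mulr_sumr.
have -> : \sum_(x | P x) s2 = s2 * n by rewrite /n mulr_sumr; apply: eq_bigr => x _; rewrite mulr1.
rewrite -/s1 -/s2; ring.
Qed.

Lemma sqr_real_ge0 (x : C) : x \is Num.real -> 0 <= x ^+ 2.
Proof. by rewrite realEsqr. Qed.

Lemma cs_ge0 (I : finType) (P : pred I) (a : I -> C) :
  (forall x, P x -> a x \is Num.real) ->
  0 <= (\sum_(x | P x) 1) * \sum_(x | P x) a x ^+ 2 - (\sum_(x | P x) a x) ^+ 2.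
Proof.
move=> ha.
have : 0 <= \sum_(x | P x) \sum_(y | P y) (a x - a y) ^+ 2.
  apply: sumr_ge0 => x Px; apply: sumr_ge0 => y Py.
  by apply: sqr_real_ge0; apply: realB; apply: ha.
by rewrite cs_id pmulr_rge0 // ltr0n.
Qed.

Lemma cs_eq0 (I : finType) (P : pred I) (a : I -> C) :
  (forall x, P x -> a x \is Num.real) ->
  (\sum_(x | P x) 1) * \sum_(x | P x) a x ^+ 2 - (\sum_(x | P x) a x) ^+ 2 = 0 ->
  forall x y, P x -> P y -> a x = a y.
Proof.
move=> ha h0.
have H : \sum_(x | P x) \sum_(y | P y) (a x - a y) ^+ 2 = 0 by rewrite cs_id h0 mulr0.
have ge0 : forall x y, P x -> P y -> 0 <= (a x - a y) ^+ 2.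
  by move=> x y Px Py; apply: sqr_real_ge0; apply: realB; apply: ha.
move=> x y Px Py.
have Hx : \sum_(y | P y) (a x - a y) ^+ 2 = 0.
  apply: (psumr_eq0P _ H) => // z Pz; apply: sumr_ge0 => w Pw; exact: ge0.
have : (a x - a y) ^+ 2 = 0.
  by apply: (psumr_eq0P _ Hx) => // z Pz; exact: ge0.
by move/eqP; rewrite sqrf_eq0 subr_eq0 => /eqP.
Qed.

Lemma cs_const (I : finType) (P : pred I) (a : I -> C) :
  (forall x y, P x -> P y -> a x = a y) ->
  (\sum_(x | P x) 1) * \sum_(x | P x) a x ^+ 2 - (\sum_(x | P x) a x) ^+ 2 = 0.
Proof.
move=> ha.
have H : \sum_(x | P x) \sum_(y | P y) (a x - a y) ^+ 2 = 0.
  apply: big1 => x Px; apply: big1 => y Py; by rewrite (ha x y Px Py) subrr expr0n.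
move: H; rewrite cs_id => /eqP; rewrite mulf_eq0 pnatr_eq0 /= => /eqP //.
Qed.


Definition nq M := \sum_(p : 'I_M * 'I_M | p.2 != p.1) (1:C).
Definition Xq N M (Psi : 'M[C]_(N, M)) :=
  nq M * \sum_(p : 'I_M * 'I_M | p.2 != p.1) `|ip Psi p.1 p.2| ^+ 2
           - (\sum_(p : 'I_M * 'I_M | p.2 != p.1) `|ip Psi p.1 p.2|) ^+ 2.
Definition Yq N M (Psi : 'M[C]_(N, M)) :=
  (\sum_(i < M) (1:C)) * \sum_(i < M) ip Psi i i ^+ 2
           - (\sum_(i < M) ip Psi i i) ^+ 2.
Arguments Xq {N M}.
Arguments Yq {N M}.

Section F.
Variables (N M : nat) (Psi : 'M[C]_(N, M)).

Lemma ip_conj i j : ip Psi j i = (ip Psi i j)^*.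
Proof.
rewrite /ip rmorph_sum; apply: eq_bigr => k _.
by rewrite rmorphM /= conjCK mulrC.
Qed.

Lemma ip_diag i : ip Psi i i = \sum_k `|Psi k i| ^+ 2.
Proof. by apply: eq_bigr => k _; rewrite normCK. Qed.

Lemma ip_diag_ge0 i : 0 <= ip Psi i i.
Proof. by rewrite ip_diag; apply: sumr_ge0 => k _; apply: exprn_ge0. Qed.

Lemma vnormE i : vnorm Psi i = sqrtC (ip Psi i i).
Proof. by rewrite ip_diag. Qed.

Hypothesis hP : Psi *m adjmx Psi = 1%:M.

Lemma trace1 : \sum_i ip Psi i i = N%:R.
Proof.
rewrite /ip exchange_big /=.
have -> : N%:R = \tr (Psi *m adjmx Psi) :> C by rewrite hP mxtrace_scalar.
rewrite /mxtrace; apply: eq_bigr => k _; rewrite mxE; apply: eq_bigr => i _.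
by rewrite /adjmx !mxE.
Qed.

Lemma trace2 : \sum_i \sum_j `|ip Psi i j| ^+ 2 = N%:R.
Proof.
pose G := adjmx Psi *m Psi.
have HG : forall i j, ip Psi i j = G j i.
  move=> i j; rewrite /G mxE; apply: eq_bigr => k _; by rewrite /adjmx !mxE mulrC.
have -> : N%:R = \tr (G *m G) :> C.
  rewrite /G mulmxA -(mulmxA (adjmx Psi)) hP mulmx1 mxtrace_mulC hP mxtrace_scalar //.
rewrite /mxtrace exchange_big /=; apply: eq_bigr => j _; rewrite mxE; apply: eq_bigr => i _.
by rewrite normCK -ip_conj !HG mulrC.
Qed.

Lemma sumM : \sum_(i < M) (1 : C) = M%:R.
Proof. by rewrite sumr_const card_ord. Qed.

Lemma TC_pair : TC Psi = \sum_(p : 'I_M * 'I_M | p.2 != p.1) `|ip Psi p.1 p.2|.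
Proof. by rewrite /TC pair_big_dep. Qed.

Lemma S_eq : \sum_(p : 'I_M * 'I_M | p.2 != p.1) `|ip Psi p.1 p.2| ^+ 2
   = N%:R - \sum_(i < M) ip Psi i i ^+ 2.
Proof.
rewrite -trace2 -(pair_big_dep xpredT (fun i j => j != i) (fun i j => `|ip Psi i j| ^+ 2)) /=.
rewrite -sumrB; apply: eq_bigr => i _.
by rewrite [in RHS](bigD1 i) //= (ger0_norm (ip_diag_ge0 i)) addrAC subrr add0r.
Qed.

Lemma TC_ge0 : 0 <= TC Psi.
Proof. by apply: sumr_ge0 => i _; apply: sumr_ge0 => j _. Qed.

Lemma TCfullE : TCfull Psi = TC Psi + N%:R.
Proof.
rewrite /TCfull /TC -trace1 -big_split; apply: eq_bigr => i _.
by rewrite (bigD1 i) //= ger0_norm ?ip_diag_ge0 // addrC.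
Qed.

Lemma key :
  M%:R * TC Psi ^+ 2 = nq M * (M%:R * N%:R - N%:R ^+ 2) - nq M * Yq Psi - M%:R * Xq Psi.
Proof. rewrite /Xq /Yq /nq S_eq TC_pair trace1 sumM; ring. Qed.

Lemma X_ge0' :
  0 <= (\sum_(p : 'I_M * 'I_M | p.2 != p.1) (1:C)) *
        \sum_(p : 'I_M * 'I_M | p.2 != p.1) `|ip Psi p.1 p.2| ^+ 2
        - (\sum_(p : 'I_M * 'I_M | p.2 != p.1) `|ip Psi p.1 p.2|) ^+ 2.
Proof. by apply: (@cs_ge0 _ (fun p : 'I_M * 'I_M => p.2 != p.1) (fun p => `|ip Psi p.1 p.2|)) => p _; apply: normr_real. Qed.

Lemma Y_ge0' :
  0 <= (\sum_(i < M) (1:C)) * \sum_(i < M) ip Psi i i ^+ 2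
           - (\sum_(i < M) ip Psi i i) ^+ 2.
Proof. by apply: (@cs_ge0 _ xpredT (fun i => ip Psi i i)) => i _; apply: ger0_real; apply: ip_diag_ge0. Qed.
Lemma X_ge0 : 0 <= Xq Psi.
Proof. exact: X_ge0'. Qed.
Lemma Y_ge0 : 0 <= Yq Psi.
Proof. exact: Y_ge0'. Qed.
End F.

Lemma equi_XY N M (Phi : 'M[C]_(N, M)) : equiangular Phi -> Xq Phi = 0 /\ Yq Phi = 0.
Proof.
move=> [hn [c hc]]; split.
  apply: (@cs_const _ (fun p : 'I_M * 'I_M => p.2 != p.1) (fun p => `|ip Phi p.1 p.2|)).
  by move=> p q Pp Pq; rewrite !hc // eq_sym.
apply: (@cs_const _ xpredT (fun i => ip Phi i i)) => i j _ _.
by rewrite -(sqrtCK (ip Phi i i)) -(sqrtCK (ip Phi j j)) -!vnormE (hn i j).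
Qed.

Lemma TC_le N M (Phi Psi : 'M[C]_(N, M)) :
  Phi *m adjmx Phi = 1%:M -> equiangular Phi -> Psi *m adjmx Psi = 1%:M ->
  TC Psi <= TC Phi.
Proof.
move=> hPhi eqPhi hPsi.
case: (posnP M) => [M0|Mgt0].
  by subst M; rewrite /TC !big_ord0.
have [X0 Y0] := equi_XY eqPhi.
have kPhi := key hPhi; rewrite X0 Y0 !mulr0 !subr0 in kPhi.
have kPsi := key hPsi; rewrite -kPhi in kPsi.
have n0 : 0 <= nq M by apply: sumr_ge0.
have : M%:R * TC Psi ^+ 2 <= M%:R * TC Phi ^+ 2.
  rewrite kPsi -addrA gerDl -opprD oppr_le0.
  by apply: addr_ge0; apply: mulr_ge0 => //; [apply: Y_ge0 | apply: X_ge0].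
rewrite ler_pM2l ?ltr0n // => h; by rewrite -ler_sqr ?nnegrE ?TC_ge0.
Qed.

Lemma max_equi N M (Phi Psi : 'M[C]_(N, M)) :
  Phi *m adjmx Phi = 1%:M -> equiangular Phi -> Psi *m adjmx Psi = 1%:M ->
  TC Phi <= TC Psi -> equiangular Psi.
Proof.
move=> hPhi eqPhi hPsi hle.
case: (leqP M 1) => [M1|M2].
  have ij : forall i j : 'I_M, i = j.
    move=> i j; apply: ord_inj; have := ltn_ord i; have := ltn_ord j; lia.
  split => [i j|]; first by rewrite (ij i j).
  by exists 0 => i j; rewrite (ij i j) eqxx.
have M0 : (0 < M)%N by lia.
have M1 : (1 < M)%N by lia.
pose i0 : 'I_M := Ordinal M0; pose j0 : 'I_M := Ordinal M1.
have [X0 Y0] := equi_XY eqPhi.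
have kPhi := key hPhi; rewrite X0 Y0 !mulr0 !subr0 in kPhi.
have kPsi := key hPsi; rewrite -kPhi in kPsi.
have npos : 0 < nq M.
  rewrite /nq (bigD1 (i0, j0)) //=.
  apply: (lt_le_trans ltr01); rewrite lerDl; exact: sumr_ge0.
have : M%:R * TC Phi ^+ 2 <= M%:R * TC Psi ^+ 2.
  by rewrite ler_pM2l ?ltr0n // ler_sqr ?nnegrE ?TC_ge0.
rewrite kPsi -addrA lerDl -opprD oppr_ge0 => hs.
have hY := mulr_ge0 (ltW npos) (Y_ge0 Psi).
have hX := mulr_ge0 (ler0n C M) (X_ge0 Psi).
have /eqP : nq M * Yq Psi + M%:R * Xq Psi = 0 by apply: le_anti; rewrite hs addr_ge0.
rewrite paddr_eq0 // !mulf_eq0 (gt_eqF npos) pnatr_eq0 /=.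
have -> : (M == 0%N) = false by lia.
move=> /andP [/eqP Y1 /eqP X1].
split.
  move=> i j; rewrite !vnormE; congr sqrtC.
  exact: (@cs_eq0 _ xpredT (fun i => ip Psi i i) (fun i _ => ger0_real (ip_diag_ge0 Psi i)) Y1).
exists `|ip Psi i0 j0| => i j ij.
apply: (@cs_eq0 _ (fun p : 'I_M * 'I_M => p.2 != p.1) (fun p => `|ip Psi p.1 p.2|)
          (fun p _ => normr_real _) X1 (i, j) (i0, j0)) => /=.
  by rewrite eq_sym.
by [].
Qed.
End S.

Unset Implicit Arguments.
Theorem theorem2 (R : rcfType) (K : scalar_field) (N M : nat) :
  (forall Phi Psi : 'M[R[i]]_(N, M),
      parseval K Phi -> equiangular Phi -> parseval K Psi ->
      TC Psi <= TC Phi)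
  /\
  ((exists Phi0 : 'M[R[i]]_(N, M), parseval K Phi0 /\ equiangular Phi0) ->
   forall Psi : 'M[R[i]]_(N, M), parseval K Psi ->
     ((forall Psi' : 'M[R[i]]_(N, M), parseval K Psi' -> TC Psi' <= TC Psi)
        <-> equiangular Psi)
     /\
     ((forall Psi' : 'M[R[i]]_(N, M), parseval K Psi' -> TCfull Psi' <= TCfull Psi)
        <-> equiangular Psi)).
Proof.
split.
  move=> Phi Psi [_ hPhi] eqPhi [_ hPsi]; exact: TC_le.
move=> [Phi0 [[hK0 hPhi0] eq0]] Psi [hK hPsi].
have part : (forall Psi' : 'M[R[i]]_(N, M), parseval K Psi' -> TC Psi' <= TC Psi) <-> equiangular Psi.
  split.
    move=> Hmax; apply: (max_equi hPhi0 eq0 hPsi); exact: (Hmax Phi0 (conj hK0 hPhi0)).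
  move=> eqPsi Psi' [_ hPsi']; exact: TC_le.
split => //.
apply: iff_trans part; split => H Psi' hp; have := H Psi' hp; case: hp => _ hp.
  by rewrite !TCfullE // lerD2r.
by rewrite !TCfullE // lerD2r.
Qed.
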